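(* In any execution of $\mathtt{search}(\mathcal{G},T)$ (defined in the context), let $\mathcal{G}'$ be the current subgame with top priority $p$, $\alpha\equiv p\pmod 2$, and let $(Z,\sigma)=\mathit{TAttr}^{\mathcal{G}',T'}_\alpha(\mathrm{pr}^{-1}(p)\cap V')$ be the computed region and strategy. Then from every vertex $v\in Z$, player $\overline{\alpha}$ can reach a vertex of priority $p$ via a path in $\mathcal{G}'$ that lies entirely in $Z$ and is consistent with $\sigma$.
   Context: Parity games: $\mathcal{G}=(V_0,V_1,E,\mathrm{pr})$, $V=V_0\cup V_1$ finite, partitioned into vertices of Even ($0$) and Odd ($1$); $E\subseteq V\times V$ with every vertex having a successor; $\mathrm{pr}:V\to\{0,\dots,d\}$. $E(u)=\{v:(u,v)\in E\}$, $\mathrm{pr}(U)=\max_{u\in U}\mathrm{pr}(u)$, $\mathrm{pr}^{-1}(p)$ the set of vertices of priority $p$, $\overline{\alpha}=1-\alpha$. A cycle is won by $\alpha$ if its highest priority has parity $\alpha$. A strategy of $\alpha$ is a partial function $\sigma$ on $V_\alpha$ with $\sigma(v)\in E(v)$; a path is consistent with $\sigma$ if every vertex $v\in\mathrm{dom}(\sigma)$ on it (other than the last) is followed by $\sigma(v)$. For $U\subseteq V$, $\mathcal{G}\cap U$ is the subgame with vertices $V\cap U$ and edges $E\cap(U\times U)$, and $\mathcal{G}\setminus U=\mathcal{G}\cap(V\setminus U)$. A $p$-tangle is a nonempty $U\subseteq V$ with $p=\mathrm{pr}(U)$ such that for $\alpha\equiv p\pmod 2$ there is a strategy $\sigma:U\cap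 V_\alpha\to U$ (witness strategy $\sigma_T(U)$) with $(U,E\cap(\sigma\cup((U\cap V_{\overline{\alpha}})\times U)))$ strongly connected and all its cycles won by $\alpha$ (''won by $\alpha$''). For a tangle $t$ won by $\alpha$ in a game with edge set $E$, $E_T(t)=\{v\notin t:\exists u\in t\cap V_{\overline{\alpha}},(u,v)\in E\}$. $T_\alpha$ denotes the tangles of $T$ won by $\alpha$; for a subgame $\mathcal{G}'$, $T\cap\mathcal{G}'$ denotes the tangles of $T$ contained in its vertex set. Tangle attractor: for a game $\mathcal{G}$ with vertices $V$, tangles $T$, player $\alpha$ and $A\subseteq V$, $\mathit{TAttr}^{\mathcal{G},T}_\alpha(A)$ is the least $Z\supseteq A$ containing every $v\in V_\alpha$ with $E(v)\cap Z\neq\emptyset$, every $v\in V_{\overline{\alpha}}$ with $E(v)\subseteq Z$, and every vertex of every $t\in T_\alpha$ with $\emptyset\neq E_T(t)\subseteq Z$ ($E_T$ computed in $\mathcal{G}$). It is computed iteratively together with a strategy $\sigma$ of $\alpha$ (initially empty): when an $\alpha$-vertex is added individually, $\sigma$ maps it to a successor already in $Z$; each $\alpha$-vertex of $A$ gets as $\sigma$-value a successor in $Z$ once one exists; when the vertices of a tangle $t$ are added, $\sigma(u):=\sigma_T(t)(u)$ for every $\alpha$-vertex $u\in t$ not yet in $\mathrm{dom}(\sigma)$. extract-tangles$(Z,\sigma)$, for a subgame $\mathcal{G}'=(V',E')$ with top priority $p$, $\alpha\equiv p$, region $Z\subseteq V'$ and strategy $\sigma$: let $Y$ be the greatest $X\subseteq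 Z$ such that every $v\in X\cap V_{\overline{\alpha}}$ has $E'(v)\subseteq X$ and every $v\in X\cap V_\alpha$ has $\sigma(v)\in X$; let $H$ be the graph on $Y$ with edges $(v,\sigma(v))$ for $v\in Y\cap V_\alpha$ and $(v,w)\in E'$ for $v\in Y\cap V_{\overline{\alpha}}$; return all bottom strongly connected components of $H$ that contain at least one edge of $H$, each with witness strategy $\sigma$ restricted to it. $\mathtt{search}(\mathcal{G},T)$ (with $T$ a set of tangles of $\mathcal{G}$): repeat forever: set $r:=\emptyset$ (a partial function $V\to\mathbb{N}$, the region function) and $Y:=\emptyset$; while $V\setminus\mathrm{dom}(r)\neq\emptyset$: let $\mathcal{G}':=\mathcal{G}\setminus\mathrm{dom}(r)$ with vertex set $V'$, $T':=T\cap\mathcal{G}'$, $p:=\mathrm{pr}(\mathcal{G}')$, $\alpha:=p\bmod 2$; compute $(Z,\sigma):=\mathit{TAttr}^{\mathcal{G}',T'}_\alpha(\mathrm{pr}^{-1}(p)\cap V')$ (the region of priority $p$); let $A:=$ extract-tangles$(Z,\sigma)$; if some $t\in A$ has $E_T(t)=\emptyset$ with $E_T$ computed in the full game $\mathcal{G}$, return $(T\cup Y,t)$; otherwise set $r(v):=p$ for all $v\in Z$ and $Y:=Y\cup A$. After the while-loop, set $T:=T\cup Y$. *)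

(* Defs.v *)
From mathcomp Require Import all_boot.
Set Implicit Arguments.
Unset Strict Implicit.
Unset Printing Implicit Defensive.

Section ParityGames.
(* owner v = false : v in V_0 (Even);  owner v = true : v in V_1 (Odd).
   Player alpha is a bool: alpha = odd p means alpha == p mod 2.          *)
Variables (V : finType) (owner : V -> bool) (E : rel V) (pr : V -> nat).

Definition prmax (U : {set V}) : nat := \max_(u in U) pr u.

Definition strat := {ffun V -> option V}.
Definition strat0 : strat := [ffun => None].

(* a tangle candidate: its vertex set and its witness strategy sigma_T *)
Definition tangle := ({set V} * strat)%type.

Definition tparity (t : tangle) : bool := odd (prmax t.1).

(* the graph (U, E /\ (sigma \cup ((U /\ V_abar) x U))) *)
Definition tgraph (t : tangle) : rel V := fun u w =>
  [&& u \in t.1, w \in t.1 &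
      if owner u == tparity t then t.2 u == Some w else E u w].

Definition is_tangle (t : tangle) : Prop :=
  [/\ t.1 != set0,
      (forall u, u \in t.1 -> owner u = tparity t ->
         exists2 w, t.2 u = Some w & (w \in t.1) && E u w),
      (forall u w, u \in t.1 -> w \in t.1 -> connect (tgraph t) u w) &
      (forall c : seq V, c != [::] -> cycle (tgraph t) c ->
         odd (\max_(x <- c) pr x) = tparity t)].

(* E_T(t) computed in the subgame with vertex set S *)
Definition escapes (S : {set V}) (t : tangle) : {set V} :=
  [set v in S | (v \notin t.1) &&
     [exists u in t.1, (owner u != tparity t) && E u v]].

Definition upd (s : strat) (v w : V) : strat :=
  [ffun x => if x == v then Some w else s x].

Definition tupd (a : bool) (s : strat) (t : tangle) : strat :=
  [ffun x => if [&& x \in t.1, owner x == a & s x == None] then t.2 x else s x].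

(* one iteration step of TAttr^{S,T}_a(A); state = (Z, sigma) *)
Inductive attr_step (S : {set V}) (T : {set tangle}) (a : bool) (A : {set V}) :
  {set V} * strat -> {set V} * strat -> Prop :=
| AS_alpha (Z : {set V}) (s : strat) (v w : V) : v \in S -> v \notin Z -> owner v = a -> w \in Z -> E v w ->
    attr_step S T a A (Z, s) (v |: Z, upd s v w)
| AS_opp (Z : {set V}) (s : strat) (v : V) : v \in S -> v \notin Z -> owner v = ~~ a ->
    (forall w, w \in S -> E v w -> w \in Z) ->
    attr_step S T a A (Z, s) (v |: Z, s)
| AS_init (Z : {set V}) (s : strat) (v w : V) : v \in A -> owner v = a -> s v = None -> w \in Z -> E v w ->
    attr_step S T a A (Z, s) (Z, upd s v w)
| AS_tangle (Z : {set V}) (s : strat) (t : tangle) : t \in T -> tparity t = a ->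
    escapes S t != set0 -> escapes S t \subset Z -> ~~ (t.1 \subset Z) ->
    attr_step S T a A (Z, s) (Z :|: t.1, tupd a s t).

Inductive star (X : Type) (R : X -> X -> Prop) : X -> X -> Prop :=
| star_refl x : star R x x
| star_step x y z : R x y -> star R y z -> star R x z.

Definition attr_done (S : {set V}) (T : {set tangle}) (a : bool) (A : {set V})
    (Z : {set V}) (s : strat) : Prop :=
  [/\ (forall v w, v \in S -> v \notin Z -> owner v = a -> w \in Z -> ~~ E v w),
      (forall v, v \in S -> v \notin Z -> owner v = ~~ a ->
         exists w, [&& w \in S, E v w & w \notin Z]),
      (forall t, t \in T -> tparity t = a -> escapes S t != set0 ->
         escapes S t \subset Z -> t.1 \subset Z) &
      (forall v w, v \in A -> owner v = a -> w \in Z -> E v w -> s v != None)].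

(* (Z, s) is a possible result of computing TAttr^{G',T'}_a(A), G' = G cap S *)
Definition tattr (S : {set V}) (T : {set tangle}) (a : bool) (A : {set V})
    (Z : {set V}) (s : strat) : Prop :=
  star (attr_step S T a A) (A, strat0) (Z, s) /\ attr_done S T a A Z s.

Definition closedX (S : {set V}) (a : bool) (s : strat) (X : {set V}) : bool :=
  [forall v in X,
     if owner v == a then (if s v is Some w then w \in X else false)
     else [forall w in S, E v w ==> (w \in X)]].

Definition ext_region (S : {set V}) (a : bool) (Z : {set V}) (s : strat) : {set V} :=
  [set v | [exists X : {set V}, [&& X \subset Z, closedX S a s X & v \in X]]].

Definition hgraph (S : {set V}) (a : bool) (s : strat) (Y : {set V}) : rel V :=
  fun u w => [&& u \in Y, w \in Y &
     if owner u == a then s u == Some w else E u w && (w \in S)].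

(* t is a bottom SCC of H containing an edge, with witness s restricted to it *)
Definition extracted (S : {set V}) (a : bool) (Z : {set V}) (s : strat) (t : tangle) : bool :=
  let Y := ext_region S a Z s in
  let H := hgraph S a s Y in
  [exists u in Y,
     [&& t.1 == [set w | connect H u w],
         [forall w, connect H u w ==> connect H w u],
         [exists x in t.1, exists y in t.1, H x y] &
         t.2 == [ffun x => if x \in t.1 then s x else None]]].

Definition extract_tangles (S : {set V}) (a : bool) (Z : {set V}) (s : strat)
  : {set tangle} := [set t | extracted S a Z s t].

(* current subgame G' = G \ dom(r), given D = dom(r) *)
Definition curT (T : {set tangle}) (D : {set V}) : {set tangle} :=
  [set t in T | t.1 \subset ~: D].
Definition topp (D : {set V}) : nat := prmax (~: D).
Definition player (D : {set V}) : bool := odd (topp D).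
Definition topset (D : {set V}) : {set V} := [set v in ~: D | pr v == topp D].

(* state of search: (T, dom r, Y) *)
Definition sstate := ({set tangle} * {set V} * {set tangle})%type.

Inductive search_step : sstate -> sstate -> Prop :=
| SS_inner (T : {set tangle}) (D : {set V}) (Y : {set tangle}) (Z : {set V}) (s : strat) :
    D != setT ->
    tattr (~: D) (curT T D) (player D) (topset D) Z s ->
    (forall t, t \in extract_tangles (~: D) (player D) Z s -> escapes setT t != set0) ->
    search_step (T, D, Y) (T, D :|: Z, Y :|: extract_tangles (~: D) (player D) Z s)
| SS_outer (T Y : {set tangle}) :
    search_step (T, setT, Y) (T :|: Y, set0, set0).

Definition search_reach (T0 : {set tangle}) (st : sstate) : Prop :=
  star search_step (T0, set0, set0) st.

Definition cons_edge (Z : {set V}) (s : strat) : rel V := fun x y =>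
  [&& E x y, y \in Z & if s x is Some w then y == w else true].

End ParityGames.

(* Main.v *)
Require Import Defs.
From mathcomp Require Import all_boot.
Set Implicit Arguments. Unset Strict Implicit. Unset Printing Implicit Defensive.

Section Pf.
Variables (V : finType) (owner : V -> bool) (E : rel V) (pr : V -> nat).

Definition Ptan (t : tangle V) : Prop :=
  (forall u, u \in t.1 -> owner u = tparity pr t -> exists w, t.2 u = Some w /\ E u w) /\
  (forall u w, u \in t.1 -> w \in t.1 -> connect (tgraph owner E pr t) u w).

Variable k : nat.

Inductive reach (Z : {set V}) (s : strat V) : V -> Prop :=
| R0 x : pr x = k -> reach Z s x
| R1 x y : cons_edge E Z s x y -> reach Z s y -> reach Z s x.

Lemma reach_path Z s x : reach Z s x -> exists p, path (cons_edge E Z s) x p /\ pr (last x p) = k.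
Proof.
elim=> {x} [x hx| x y hxy _ [p [hp hl]]]; first by exists [::].
by exists (y :: p); rewrite /= hxy hp.
Qed.

Lemma reach_transfer (Z : {set V}) (s : strat V) (Z' : {set V}) (s' : strat V) x : Z \subset Z' ->
  (forall y, y \in Z -> pr y <> k -> s' y = s y) ->
  reach Z s x -> x \in Z -> reach Z' s' x.
Proof.
move=> sZ hs; elim=> {x} [x hx | x y hxy _ IH] xZ; first exact: R0.
have [hk|/eqP hk] := eqVneq (pr x) k; first exact: R0.
move: hxy; rewrite /cons_edge => /and3P [exy yZ hsx].
apply: (R1 (y:=y)); last exact: IH.
by rewrite /cons_edge exy (subsetP sZ _ yZ) hs.
Qed.

Section Attr.
Variables (S : {set V}) (T : {set tangle V}) (a : bool) (A : {set V}).
Hypothesis HA : forall x, x \in A -> pr x = k.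
Hypothesis HAS : A \subset S.
Hypothesis HT : forall t, t \in T -> Ptan t /\ t.1 \subset S.
Hypothesis HS : forall v, v \in S -> exists w, w \in S /\ E v w.

Definition Inv (st : {set V} * strat V) : Prop :=
  let (Z, s) := st in
  [/\ (A \subset Z) && (Z \subset S), (forall x, x \notin Z -> s x = None),
      (forall x w, s x = Some w -> E x w),
      (forall x, x \in Z -> owner x = a -> s x = None -> pr x = k) &
      (forall x, x \in Z -> reach Z s x)].

Lemma Inv0 : Inv (A, strat0 V).
Proof.
split => //.
- by rewrite subxx.
- by move=> x _; rewrite ffunE.
- by move=> x w; rewrite ffunE.
- by move=> x xA; rewrite HA.
- by move=> x xA; apply: R0; rewrite HA.
Qed.

Lemma Inv_step st st' : attr_step owner E pr S T a A st st' -> Inv st -> Inv st'.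
Proof.
case=> {st st'}.
- move=> Z s v w vS vZ ov wZ evw [/andP[AZ ZS] sN sE sA sR].
  have sub : Z \subset v |: Z by apply/subsetP=> x xZ; rewrite in_setU1 xZ orbT.
  have tr : forall y, y \in Z -> pr y <> k -> upd s v w y = s y.
    by move=> y yZ _; rewrite /upd ffunE; case: eqP => // eyv; rewrite -eyv yZ in vZ.
  split.
  + apply/andP; split; first exact: subset_trans AZ sub.
    by apply/subsetP=> x; rewrite in_setU1 => /orP [/eqP->|/(subsetP ZS)].
  + move=> x; rewrite in_setU1 negb_or => /andP [xv xZ]; rewrite /upd ffunE (negbTE xv); exact: sN.
  + move=> x y; rewrite /upd ffunE; case: eqP => [->[<-]|_] //; exact: sE.
  + move=> x; rewrite in_setU1 /upd ffunE; case: eqP => //= _ xZ ox; exact: sA.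
  + move=> x; rewrite in_setU1 => /orP [/eqP->|xZ]; last first.
      exact: (reach_transfer sub tr (sR x xZ) xZ).
    apply: (R1 (y:=w)); last exact: (reach_transfer sub tr (sR w wZ) wZ).
    by rewrite /cons_edge evw in_setU1 wZ orbT /upd ffunE eqxx /= eqxx.
- move=> Z s v vS vZ ov hall [/andP[AZ ZS] sN sE sA sR].
  have sub : Z \subset v |: Z by apply/subsetP=> x xZ; rewrite in_setU1 xZ orbT.
  have tr : forall y, y \in Z -> pr y <> k -> s y = s y by [].
  split.
  + apply/andP; split; first exact: subset_trans AZ sub.
    by apply/subsetP=> x; rewrite in_setU1 => /orP [/eqP->|/(subsetP ZS)].
  + move=> x; rewrite in_setU1 negb_or => /andP [xv xZ]; exact: sN.
  + exact: sE.
  + move=> x; rewrite in_setU1 => /orP [/eqP-> | xZ]; last exact: sA.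
    by rewrite ov => /eqP; case: a.
  + move=> x; rewrite in_setU1 => /orP [/eqP->|xZ]; last first.
      exact: (reach_transfer sub tr (sR x xZ) xZ).
    have [w [wS evw]] := HS vS.
    have wZ := hall w wS evw.
    apply: (R1 (y:=w)); last exact: (reach_transfer sub tr (sR w wZ) wZ).
    by rewrite /cons_edge evw in_setU1 wZ orbT sN.
- move=> Z s v w vA ov sv wZ evw [/andP[AZ ZS] sN sE sA sR].
  have vZ : v \in Z by apply: (subsetP AZ).
  have tr : forall y, y \in Z -> pr y <> k -> upd s v w y = s y.
    by move=> y yZ hy; rewrite /upd ffunE; case: eqP => // eyv; rewrite eyv HA in hy.
  split => //.
  + by rewrite AZ ZS.
  + move=> x xZ; rewrite /upd ffunE; case: eqP => [exv|_]; last exact: sN.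
    by rewrite exv vZ in xZ.
  + move=> x y; rewrite /upd ffunE; case: eqP => [->[<-]|_] //; exact: sE.
  + move=> x xZ ox; rewrite /upd ffunE; case: eqP => [->|_ ]; [by rewrite HA | exact: sA].
  + move=> x xZ; exact: (reach_transfer (subxx Z) tr (sR x xZ) xZ).
- move=> Z s t tT tpa esc escZ nsub [/andP[AZ ZS] sN sE sA sR].
  have [[Pt1 Pt2] t1S] := HT tT.
  set s' := tupd owner a s t.
  have s'E : forall x, s' x = if [&& x \in t.1, owner x == a & s x == None] then t.2 x else s x.
    by move=> x; rewrite /s' /tupd ffunE.
  have sub : Z \subset Z :|: t.1 := subsetUl _ _.
  have tr : forall y, y \in Z -> pr y <> k -> s' y = s y.
    move=> y yZ hy; rewrite s'E; case: ifP => // /and3P [_ /eqP oy /eqP sy].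
    by case: hy; apply: sA.
  have tS : forall x, x \in t.1 -> owner x = a -> exists w, s' x = Some w /\ E x w.
    move=> x xt ox; rewrite s'E xt ox eqxx /=; case Hsx: (s x) => [w|] /=.
      by exists w; split => //; exact: sE Hsx.
    rewrite -tpa in ox; exact: Pt1 x xt ox.
  split.
  + apply/andP; split; first exact: subset_trans AZ sub.
    by rewrite subUset ZS t1S.
  + move=> x; rewrite in_setU negb_or => /andP [xZ xt]; rewrite s'E (negbTE xt); exact: sN.
  + move=> x w; rewrite s'E; case: ifP => [/and3P [xt /eqP ox _] | _]; last exact: sE.
    move=> h; rewrite -tpa in ox; have [w' [h' e']] := Pt1 x xt ox.
    by move: h; rewrite h' => -[<-].
  + move=> x; rewrite in_setU; case xt: (x \in t.1); [move=> _ ox sx' | rewrite orbF => xZ ox sx'].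
      by have [w [hw _]] := tS x xt ox; rewrite hw in sx'.
    by apply: sA xZ ox _; rewrite -sx' s'E xt.
  + case/set0Pn: esc => e he; have eZ := subsetP escZ e he.
    move: he; rewrite inE => /andP [eS /andP [et /existsP [u' /andP [u't /andP [ou' eu'e]]]]].
    have ou'a : (owner u' == a) = false by rewrite -tpa; apply/negbTE.
    have key : forall p x, x \in t.1 -> path (tgraph owner E pr t) x p -> last x p = u' ->
        reach (Z :|: t.1) s' x.
      elim => [|y p IH] x xt.
        move=> _ /= exu; rewrite exu in xt *.
        case u'Z: (u' \in Z); first exact: reach_transfer sub tr (sR _ u'Z) u'Z.
        apply: (R1 (y:=e)); last exact: reach_transfer sub tr (sR e eZ) eZ.
        by rewrite /cons_edge eu'e in_setU eZ /= s'E ou'a andbF sN ?u'Z.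
      move=> /= /andP [hxy hp] hl.
      move: hxy; rewrite /tgraph => /and3P [_ yt hif].
      case xZ: (x \in Z); first exact: reach_transfer sub tr (sR _ xZ) xZ.
      apply: (R1 (y:=y)); last exact: IH y yt hp hl.
      move: hif; rewrite tpa; case ox: (owner x == a) => /=.
        move/eqP => ht2.
        have hs' : s' x = Some y by rewrite s'E xt ox (sN x (negbT xZ)) eqxx /= ht2.
        have [w [hw ew]] := tS x xt (eqP ox).
        rewrite hs' in hw; case: hw => hyw; subst w.
        by rewrite /cons_edge hs' ew in_setU yt orbT /= eqxx.
      move=> exy.
      by rewrite /cons_edge exy in_setU yt orbT s'E xt ox /= (sN x (negbT xZ)).
    move=> x; rewrite in_setU; case xZ: (x \in Z) => /=; [move=> _ | move=> xt].
      exact: reach_transfer sub tr (sR _ xZ) xZ.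
    have := Pt2 x u' xt u't; case/connectP => p hp hl; exact: key p x xt hp (esym hl).
Qed.

Lemma Inv_star st st' : star (attr_step owner E pr S T a A) st st' -> Inv st -> Inv st'.
Proof. by elim => // x y z hxy _ IH /(Inv_step hxy). Qed.

Lemma connect_lift (e e' : rel V) (C : {set V}) :
  (forall x y, x \in C -> e x y -> y \in C /\ e' x y) ->
  forall x y, x \in C -> connect e x y -> connect e' x y.
Proof.
move=> h x y xC /connectP [p hp ->]; elim: p x xC hp => //= z p IH x xC /andP [hxz hp].
have [zC e'xz] := h x z xC hxz; exact: connect_trans (connect1 e'xz) (IH z zC hp).
Qed.

Hypothesis Ha : a = odd k.
Hypothesis HSk : forall x, x \in S -> pr x <= k.

Lemma extract_ok Z s t : Inv (Z, s) -> t \in extract_tangles owner E S a Z s -> Ptan t.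
Proof.
move=> [/andP[AZ ZS] sN sE sA sR]; rewrite inE /extracted.
set Y := ext_region owner E S a Z s.
set H := hgraph owner E S a s Y.
case/existsP => u /andP [uY /and4P [/eqP t1 /forallP bot _ /eqP t2]].
have YZ : forall v, v \in Y -> v \in Z.
  by move=> v; rewrite inE => /existsP [X /and3P [XZ _ vX]]; exact: (subsetP XZ).
have Ycl : forall v, v \in Y -> if owner v == a then (exists w, s v = Some w /\ w \in Y)
     else forall w, w \in S -> E v w -> w \in Y.
  move=> v; rewrite inE => /existsP [X /and3P [XZ cXb vX]].
  move/forallP: (cXb) => cX.
  have := cX v; rewrite vX /=.
  have XY : forall w, w \in X -> w \in Y.
    by move=> w wX; rewrite inE; apply/existsP; exists X; rewrite XZ wX cXb.
  case: (owner v == a).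
    by case: (s v) => // w wX; exists w; split => //; exact: XY.
  by move/forallP => h w wS ew; apply: XY; have := h w; rewrite wS ew.
have HY : forall x y, H x y -> (x \in Y) && (y \in Y).
  by move=> x y /and3P [-> -> _].
have connY : forall x y, connect H x y -> x \in Y -> y \in Y.
  move=> x y /connectP [p hp ->]; elim: p x hp => //= z p IH x /andP [hxz hp] _.
  by apply: IH hp _; case/andP: (HY _ _ hxz).
have t1m : forall x, (x \in t.1) = connect H u x by move=> x; rewrite t1 inE.
have rH : forall x, reach Z s x -> x \in Y -> exists z, connect H x z /\ pr z = k.
  move=> x; elim=> {x} [x hx _ | x y hxy _ IH xY]; first by exists x.
  move: hxy => /and3P [exy yZ hs].
  have hxy : H x y.
    have := Ycl x xY; rewrite /H /hgraph xY /=.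
    case: (owner x == a) => /=.
    by case=> w [hw wY]; move: hs hw; case: (s x) => // w' /eqP -> [->]; rewrite wY eqxx.
    move=> h; have yY := h y (subsetP ZS y yZ) exy; by rewrite yY exy (subsetP ZS y yZ).
  have yY : y \in Y by case/andP: (HY _ _ hxy).
  have [z [hz pz]] := IH yY.
  by exists z; split => //; exact: connect_trans (connect1 hxy) hz.
have [z [hz pz]] := rH u (sR u (YZ u uY)) uY.
have zt : z \in t.1 by rewrite t1m.
have tS : forall x, x \in t.1 -> x \in S.
  by move=> x; rewrite t1m => hx; apply: (subsetP ZS); apply: YZ; exact: connY _ _ hx uY.
have hpm : prmax pr t.1 = k.
  apply/eqP; rewrite eqn_leq; apply/andP; split.
    by apply/bigmax_leqP => x xt; apply: HSk; apply: tS.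
  by rewrite -pz; apply: (leq_bigmax_cond (F:=pr)) zt.
have tpar : tparity pr t = a by rewrite /tparity hpm Ha.
split.
  move=> x xt; rewrite tpar => ox.
  have xY : x \in Y by rewrite t1m in xt; exact: connY _ _ xt uY.
  have := Ycl x xY; rewrite ox eqxx => -[w [hw _]].
  by exists w; rewrite t2 ffunE xt; split => //; exact: sE hw.
move=> x y xt yt.
have hxu : connect H x u by have := bot x; rewrite -t1m xt.
have hxy : connect H x y by apply: connect_trans hxu _; rewrite -t1m.
move: hxy; apply: (connect_lift (C := t.1)) xt => x' y' x't hx'y'; split.
  by rewrite /= t1m; rewrite t1m in x't; exact: connect_trans x't (connect1 hx'y').
rewrite /tgraph x't /= tpar.
have y't : y' \in t.1 by rewrite t1m; rewrite t1m in x't; exact: connect_trans x't (connect1 hx'y').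
rewrite y't /=.
move: hx'y' => /and3P [_ _]; case: (owner x' == a) => [/eqP h | /andP [e _] //].
by rewrite t2 ffunE x't h.
Qed.
End Attr.
End Pf.

Section Search.
Variables (V : finType) (owner : V -> bool) (E : rel V) (pr : V -> nat).
Hypothesis Htotal : forall v : V, exists w, E v w.

Definition SInv (st : sstate V) : Prop :=
  let: (T, D, Y) := st in
  [/\ (forall t, t \in T -> Ptan owner E pr t), (forall t, t \in Y -> Ptan owner E pr t) &
      (forall v, v \in ~: D -> exists w, w \in ~: D /\ E v w)].

Lemma attr_inv (T : {set tangle V}) (D Z : {set V}) (s : strat V) :
  (forall t, t \in T -> Ptan owner E pr t) ->
  (forall v, v \in ~: D -> exists w, w \in ~: D /\ E v w) ->
  tattr owner E pr (~: D) (curT T D) (player pr D) (topset pr D) Z s ->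
  Inv owner E pr (topp pr D) (~: D) (player pr D) (topset pr D) (Z, s).
Proof.
move=> PT HS [hst _].
have HA : forall x, x \in topset pr D -> pr x = topp pr D by move=> x; rewrite inE => /andP [_ /eqP].
have HAS : topset pr D \subset ~: D by apply/subsetP => x; rewrite inE => /andP [].
apply: (Inv_star HA _ HS hst (Inv0 _ _ _ HA HAS)).
by move=> t; rewrite inE => /andP [tT sub]; split; [exact: PT|].
Qed.

Lemma SInv_step st st' : search_step owner E pr st st' -> SInv st -> SInv st'.
Proof.
case=> {st st'}.
- move=> T D Y Z s hD hat hext [PT PY HS].
  have hinv := attr_inv PT HS hat.
  case: hat => _ [h1 h2 _ _].
  split => //.
  + move=> t; rewrite in_setU => /orP [tY|te]; first exact: PY.
    apply: (extract_ok (k := topp pr D) (S := ~: D) (A := topset pr D) _ _ hinv te) => //.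
    by move=> x xS; apply: (leq_bigmax_cond (F := pr)).
  + move=> v; rewrite !inE negb_or => /andP [vD vZ].
    have vS : v \in ~: D by rewrite inE.
    case ov: (owner v == player pr D).
      have [w [wS evw]] := HS v vS.
      exists w; split => //; rewrite !inE negb_or -(in_setC w D) wS /=.
      by apply/negP => wZ; have := h1 v w vS vZ (eqP ov) wZ; rewrite evw.
    have ov' : owner v = ~~ player pr D by move/negbT: ov; case: (owner v); case: (player pr D).
    have [w /and3P [wS evw wZ]] := h2 v vS vZ ov'.
    by exists w; split => //; rewrite !inE negb_or -(in_setC w D) wS.
- move=> T Y [PT PY HS]; split.
  + by move=> t; rewrite in_setU => /orP [/PT|/PY].
  + by move=> t; rewrite inE.
  + by move=> v _; have [w ew] := Htotal v; exists w; rewrite inE in_set0.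
Qed.

Lemma SInv_star st st' : star (search_step owner E pr) st st' -> SInv st -> SInv st'.
Proof. by elim => // x y z hxy _ IH /(SInv_step hxy). Qed.
End Search.

Theorem lemma3 (V : finType) (owner : V -> bool) (E : rel V) (pr : V -> nat)
  (Htotal : forall v : V, exists w, E v w)
  (T0 : {set tangle V})
  (HT0 : forall t, t \in T0 -> is_tangle owner E pr t)
  (T : {set tangle V}) (D : {set V}) (Y : {set tangle V})
  (Z : {set V}) (s : strat V) :
  search_reach owner E pr T0 (T, D, Y) ->
  D != setT ->
  tattr owner E pr (~: D) (curT T D) (player pr D) (topset pr D) Z s ->
  forall v, v \in Z ->
    exists p : seq V, path (cons_edge E Z s) v p /\ pr (last v p) = topp pr D.
Proof.
move=> hr _ hat v vZ.
have : SInv owner E pr (T0, set0, set0).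
  split.
  + move=> t /HT0 [_ h2 h3 _]; split => // u uT ou.
    by have [w hw /andP [_ e]] := h2 u uT ou; exists w.
  + by move=> t; rewrite inE.
  + by move=> x _; have [w ew] := Htotal x; exists w; rewrite inE in_set0.
move/(SInv_star Htotal hr) => [PT PY HS].
have [_ _ _ _ sR] := attr_inv PT HS hat.
exact: reach_path (sR v vZ).
Qed.
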